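(* Let $\otimes$ be a uninorm on $[0,1]$ and $\neg$ a strong negation function. Then $(\otimes,\Phi^{\neg}(\otimes))$ satisfies the rearrangement inequality if and only if $(\otimes,\Phi^{\neg}(\otimes))$ satisfies the dual rearrangement inequality.
   Context: A uninorm is a function $\otimes:[0,1]^2\to[0,1]$ that is commutative, associative, monotonic (for all $x,y,z\in[0,1]$, $x\leq y$ implies $x\otimes z\leq y\otimes z$), and has an identity element $e\in[0,1]$ ($x\otimes e=x$ for all $x$). A negation is a monotonically nonincreasing function $\neg:[0,1]\to[0,1]$ with $\neg(0)=1$, $\neg(1)=0$; it is strong if it is strictly monotone and involutive. For $f:[0,1]^2\to[0,1]$, $\Phi^{\neg}(f)(x,y)=\neg(f(\neg x,\neg y))$. For uninorms $\otimes,\oplus$, the pair $(\otimes,\oplus)$ satisfies the rearrangement inequality if for every $n\geq1$, all $0\leq x_1\leq\cdots\leq x_n\leq 1$, $0\leq y_1\leq\cdots\leq y_n\leq 1$ and every permutation $\sigma$ of $\{1,\dots,n\}$, $$(x_n\otimes y_1)\oplus\cdots\oplus(x_1\otimes y_n)\leq (x_{\sigma(1)}\otimes y_1)\oplus\cdots\oplus(x_{\sigma(n)}\otimes y_n)\leq (x_1\otimes y_1)\oplus\cdots\oplus(x_n\otimes y_n),$$ and satisfies the dual rearrangement inequality if for all such data $$(x_n\oplus y_1)\otimes\cdots\otimes(x_1\oplus y_n)\geq (x_{\sigma(1)}\oplus y_1)\otimes\cdots\otimes(x_{\sigma(n)}\oplus y_n)\geq (x_1\oplus y_1)\otimes\cdots\otimes(x_n\oplus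 y_n).$$ *)

(* Defs.v *)
From HB Require Import structures.
From mathcomp Require Import all_boot all_order all_algebra all_fingroup.
From mathcomp Require Import reals.
Set Implicit Arguments. Unset Strict Implicit. Unset Printing Implicit Defensive.
Import Order.TTheory GRing.Theory Num.Theory.
Local Open Scope ring_scope.

Section Defs.
Variable R : realType.

Definition in01 (x : R) : Prop := 0 <= x <= 1.

(* A uninorm on [0,1]; binary functions are represented as R -> R -> R,
   with all axioms imposed on [0,1] (values outside are irrelevant). *)
Definition uninorm (U : R -> R -> R) : Prop :=
  [/\ (forall x y, in01 x -> in01 y -> in01 (U x y)),
      (forall x y, in01 x -> in01 y -> U x y = U y x),
      (forall x y z, in01 x -> in01 y -> in01 z -> U x (U y z) = U (U x y) z),
      (forall x y z, in01 x -> in01 y -> in01 z -> x <= y -> U x z <= U y z)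
    & exists2 e, in01 e & forall x, in01 x -> U x e = x].

Definition negation (N : R -> R) : Prop :=
  [/\ (forall x, in01 x -> in01 (N x)),
      (forall x y, in01 x -> in01 y -> x <= y -> N y <= N x),
      N 0 = 1 & N 1 = 0].

Definition strong_negation (N : R -> R) : Prop :=
  [/\ negation N,
      (forall x y, in01 x -> in01 y -> x < y -> N y < N x)
    & (forall x, in01 x -> N (N x) = x)].

Definition Phi (N : R -> R) (f : R -> R -> R) : R -> R -> R :=
  fun x y => N (f (N x) (N y)).

Definition opfold (op : R -> R -> R) (s : seq R) : R :=
  if s is a :: t then foldl op a t else 0.

Definition opbig (op : R -> R -> R) (n : nat) (a : 'I_n -> R) : R :=
  opfold op [seq a i | i <- enum 'I_n].

Definition nondecr (n : nat) (x : 'I_n -> R) : Prop :=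
  forall i j : 'I_n, (i <= j)%N -> x i <= x j.

Definition rearrangement (T S : R -> R -> R) : Prop :=
  forall (n : nat) (x y : 'I_n -> R) (sigma : 'S_n), (1 <= n)%N ->
    (forall i, in01 (x i)) -> (forall i, in01 (y i)) ->
    nondecr x -> nondecr y ->
    opbig S (fun i => T (x (rev_ord i)) (y i))
      <= opbig S (fun i => T (x (sigma i)) (y i))
    /\ opbig S (fun i => T (x (sigma i)) (y i))
      <= opbig S (fun i => T (x i) (y i)).

Definition dual_rearrangement (T S : R -> R -> R) : Prop :=
  forall (n : nat) (x y : 'I_n -> R) (sigma : 'S_n), (1 <= n)%N ->
    (forall i, in01 (x i)) -> (forall i, in01 (y i)) ->
    nondecr x -> nondecr y ->
    opbig T (fun i => S (x (rev_ord i)) (y i))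
      >= opbig T (fun i => S (x (sigma i)) (y i))
    /\ opbig T (fun i => S (x (sigma i)) (y i))
      >= opbig T (fun i => S (x i) (y i)).

End Defs.

(* Main.v *)
Require Import Defs.
From HB Require Import structures.
From mathcomp Require Import all_boot all_order all_algebra all_fingroup.
From mathcomp Require Import reals.
Local Open Scope ring_scope.

Lemma map_rev_enum n : map (@rev_ord n) (enum 'I_n) = rev (enum 'I_n).
Proof.
apply: (inj_map val_inj); rewrite map_rev -map_comp.
have -> : map (val \o @rev_ord n) (enum 'I_n) = map (fun k => (n - k.+1)%N) (map val (enum 'I_n)) by rewrite -map_comp.
rewrite val_enum_ord; apply: (@eq_from_nth _ 0%N); first by rewrite size_map size_rev.
move=> i; rewrite size_map size_iota => Hi.
rewrite (nth_map 0%N) ?size_iota // nth_rev ?size_iota //.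
rewrite !nth_iota //. rewrite ltn_subrL /=; exact: leq_ltn_trans Hi.
Qed.

Section Folds.
Variable R : realType.
Variable op : R -> R -> R.
Hypothesis Hcl : forall a b, in01 a -> in01 b -> in01 (op a b).
Hypothesis Hcomm : forall a b, in01 a -> in01 b -> op a b = op b a.
Hypothesis Hassoc : forall a b c, in01 a -> in01 b -> in01 c ->
  op a (op b c) = op (op a b) c.

Lemma foldl_in a s : in01 a -> (forall z, z \in s -> in01 z) -> in01 (foldl op a s).
Proof.
elim: s a => [|b s IH] a Ha Hs //=.
apply: IH => [|z Hz]; first by apply: Hcl => //; apply: Hs; rewrite inE eqxx.
by apply: Hs; rewrite inE Hz orbT.
Qed.

Lemma foldl_opl b a s : in01 b -> in01 a -> (forall z, z \in s -> in01 z) ->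
  foldl op (op b a) s = op b (foldl op a s).
Proof.
elim: s a => [|c s IH] a Hb Ha Hs //=.
have Hc : in01 c by apply: Hs; rewrite inE eqxx.
have Hs' : forall z, z \in s -> in01 z by move=> z Hz; apply: Hs; rewrite inE Hz orbT.
by rewrite -Hassoc // IH //; exact: Hcl.
Qed.

Lemma opfold_rcons u a : (0 < size u)%N -> opfold op (rcons u a) = op (opfold op u) a.
Proof. by case: u => [//|c u] _; rewrite rcons_cons /= foldl_rcons. Qed.

Lemma opfold_in s : (forall z, z \in s -> in01 z) -> (0 < size s)%N -> in01 (opfold op s).
Proof.
case: s => [//|a s] H _ /=; apply: foldl_in => [|z Hz]; apply: H; first by rewrite inE eqxx.
by rewrite inE Hz orbT.
Qed.

Lemma opfold_rev s : (forall z, z \in s -> in01 z) -> opfold op (rev s) = opfold op s.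
Proof.
case: s => [//|a s].
elim: s a => [|b s IH] a H //.
rewrite rev_cons opfold_rcons; last by rewrite size_rev.
have Ha : in01 a by apply: H; rewrite inE eqxx.
have Hbs : forall z, z \in b :: s -> in01 z by move=> z Hz; apply: H; rewrite inE Hz orbT.
have Hb : in01 b by apply: Hbs; rewrite inE eqxx.
have Hs : forall z, z \in s -> in01 z by move=> z Hz; apply: Hbs; rewrite inE Hz orbT.
rewrite IH //= Hcomm //; last exact: foldl_in.
by rewrite foldl_opl.
Qed.
End Folds.

Lemma opfold_map (R : realType) (A B : R -> R -> R) (N : R -> R) s :
  (forall a b, in01 a -> in01 b -> in01 (A a b)) ->
  (forall a b, in01 a -> in01 b -> N (A a b) = B (N a) (N b)) ->
  (forall z, z \in s -> in01 z) -> (0 < size s)%N ->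
  N (opfold A s) = opfold B (map N s).
Proof.
move=> Acl hom; case: s => [//|a s] H _ /=.
elim: s a H => [|b s IH] a H //=.
have Ha : in01 a by apply: H; rewrite inE eqxx.
have Hbs : forall z, z \in b :: s -> in01 z by move=> z Hz; apply: H; rewrite inE Hz orbT.
have Hb : in01 b by apply: Hbs; rewrite inE eqxx.
rewrite IH; first by rewrite hom.
move=> z; rewrite inE => /orP [/eqP -> |Hz]; first exact: Acl.
by apply: Hbs; rewrite inE Hz orbT.
Qed.

Lemma keyE (R : realType) (A B : R -> R -> R) (N : R -> R) n
  (f g : 'I_n -> R) :
  (forall a b, in01 a -> in01 b -> in01 (A a b)) ->
  (forall a b, in01 a -> in01 b -> A a b = A b a) ->
  (forall a b c, in01 a -> in01 b -> in01 c -> A a (A b c) = A (A a b) c) ->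
  (forall a b, in01 a -> in01 b -> N (A a b) = B (N a) (N b)) ->
  (forall a, in01 a -> N (N a) = a) ->
  (1 <= n)%N -> (forall i, in01 (f i)) ->
  (forall j, g j = N (f (rev_ord j))) ->
  opbig A f = N (opbig B g).
Proof.
move=> Acl Acomm Aassoc hom Ninv n1 fin Hg.
have Hall : forall z, z \in map f (enum 'I_n) -> in01 z.
  by move=> z /mapP [i _ ->].
have Hsz : (0 < size (map f (enum 'I_n)))%N by rewrite size_map size_enum_ord.
rewrite /opbig.
have -> : map g (enum 'I_n) = map N (map f (map (@rev_ord n) (enum 'I_n))).
  by rewrite -!map_comp; apply: eq_map => j; rewrite /= Hg.
rewrite map_rev_enum map_rev.
rewrite -(@opfold_map R A B N) //; last by rewrite size_rev.
- by rewrite opfold_rev // ?Ninv //; apply: opfold_in.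
- by move=> z; rewrite mem_rev; apply: Hall.
Qed.

Theorem corollary1 (R : realType) (U : R -> R -> R) (N : R -> R) :
  uninorm U -> strong_negation N ->
  (rearrangement U (Phi N U) <-> dual_rearrangement U (Phi N U)).
Proof.
move=> [Ucl Ucomm Uassoc Umono _] [HN Nstrict Ninv]; move: HN; rewrite /negation => -[Nin Nmono N0 N1].
set S := Phi N U.
have Scl : forall a b, in01 a -> in01 b -> in01 (S a b).
  by move=> a b Ha Hb; apply: (Nin); apply: (Ucl); apply: (Nin).
have Scomm : forall a b, in01 a -> in01 b -> S a b = S b a.
  by move=> a b Ha Hb; rewrite /S /Phi Ucomm //; apply: (Nin).
have homU : forall a b, in01 a -> in01 b -> N (U a b) = S (N a) (N b).
  by move=> a b Ha Hb; rewrite /S /Phi !Ninv.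
have homS : forall a b, in01 a -> in01 b -> N (S a b) = U (N a) (N b).
  by move=> a b Ha Hb; rewrite /S /Phi Ninv //; apply: (Ucl); apply: (Nin).
have Sassoc : forall a b c, in01 a -> in01 b -> in01 c -> S a (S b c) = S (S a b) c.
  move=> a b c Ha Hb Hc; rewrite /S /Phi !Ninv; try (apply: (Ucl); apply: (Nin) => //).
  by rewrite Uassoc //; apply: (Nin).
have opbig_in : forall (op : R -> R -> R) n (f : 'I_n -> R),
    (forall a b, in01 a -> in01 b -> in01 (op a b)) ->
    (1 <= n)%N -> (forall i, in01 (f i)) -> in01 (opbig op f).
  move=> op n f opcl n1 fin; apply: opfold_in => //.
    by move=> z /mapP [i _ ->].
  by rewrite size_map size_enum_ord.
split=> H n x y sigma n1 xin yin xnd ynd.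
- set x' := fun j => N (x (rev_ord j)).
  set y' := fun j => N (y (rev_ord j)).
  have sinj : injective (fun j => rev_ord (sigma (rev_ord j))).
    by move=> a b /rev_ord_inj/perm_inj/rev_ord_inj.
  set sigma' := perm sinj.
  have x'in : forall i, in01 (x' i) by move=> i; apply: (Nin).
  have y'in : forall i, in01 (y' i) by move=> i; apply: (Nin).
  have x'nd : nondecr x'.
    move=> i j Hij; apply: (Nmono) => //; apply: xnd.
    by rewrite /= leq_sub2l // ltnS.
  have y'nd : nondecr y'.
    move=> i j Hij; apply: (Nmono) => //; apply: ynd.
    by rewrite /= leq_sub2l // ltnS.
  have key : forall tau tau' : 'I_n -> 'I_n,
      (forall j, tau' j = rev_ord (tau (rev_ord j))) ->
      opbig U (fun i => S (x (tau i)) (y i))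
      = N (opbig S (fun j => U (x' (tau' j)) (y' j))).
    move=> tau tau' Ht; apply: (@keyE R U S N) => //; first by move=> j; apply: (Scl).
    by move=> j; rewrite Ht /x' rev_ordK homS.
  have [H1 H2] := H n x' y' sigma' n1 x'in y'in x'nd y'nd.
  rewrite (key (@rev_ord n) (@rev_ord n)); last by move=> j; rewrite !rev_ordK.
  rewrite (key sigma sigma'); last by move=> j; rewrite permE.
  rewrite (key (@id _) (@id _)); last by move=> j; rewrite rev_ordK.
  split; apply: (Nmono) => //; apply: opbig_in => // i; apply: (Ucl) => //.
- set x' := fun j => N (x (rev_ord j)).
  set y' := fun j => N (y (rev_ord j)).
  have sinj : injective (fun j => rev_ord (sigma (rev_ord j))).
    by move=> a b /rev_ord_inj/perm_inj/rev_ord_inj.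
  set sigma' := perm sinj.
  have x'in : forall i, in01 (x' i) by move=> i; apply: (Nin).
  have y'in : forall i, in01 (y' i) by move=> i; apply: (Nin).
  have x'nd : nondecr x'.
    move=> i j Hij; apply: (Nmono) => //; apply: xnd.
    by rewrite /= leq_sub2l // ltnS.
  have y'nd : nondecr y'.
    move=> i j Hij; apply: (Nmono) => //; apply: ynd.
    by rewrite /= leq_sub2l // ltnS.
  have key : forall tau tau' : 'I_n -> 'I_n,
      (forall j, tau' j = rev_ord (tau (rev_ord j))) ->
      opbig S (fun i => U (x (tau i)) (y i))
      = N (opbig U (fun j => S (x' (tau' j)) (y' j))).
    move=> tau tau' Ht; apply: (@keyE R S U N) => //; first by move=> j; apply: (Ucl).
    by move=> j; rewrite Ht /x' rev_ordK homU.
  have [H1 H2] := H n x' y' sigma' n1 x'in y'in x'nd y'nd.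
  rewrite (key (@rev_ord n) (@rev_ord n)); last by move=> j; rewrite !rev_ordK.
  rewrite (key sigma sigma'); last by move=> j; rewrite permE.
  rewrite (key (@id _) (@id _)); last by move=> j; rewrite rev_ordK.
  split; apply: (Nmono) => //; apply: opbig_in => // i; apply: (Scl) => //.
Qed.
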